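(* Let $\mathcal F\subseteq 2^{[n]}$ and $K>0$. If $\lambda_{n-|F|}(\mathcal U(F))\le K$ for all $F\in\mathcal F$, then $\lambda_n(\mathcal F)\le K$.
   Context: For a family $\mathcal G$ of subsets of an $m$-element ground set, the Lubell mass is $\lambda_m(\mathcal G)=\sum_{G\in\mathcal G}\binom{m}{|G|}^{-1}$. For $F\in\mathcal F$, $\mathcal U(F)=\mathcal U_{\mathcal F}(F):=\{G\setminus F:\ G\in\mathcal F,\ F\subseteq G\}$, a family of subsets of the $(n-|F|)$-element set $[n]\setminus F$. *)

(* Defs.v *)
From HB Require Import structures.
From mathcomp Require Import all_boot all_order all_algebra.
Set Implicit Arguments. Unset Strict Implicit. Unset Printing Implicit Defensive.
Import Order.TTheory GRing.Theory Num.Theory.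
Local Open Scope ring_scope.

Definition lubell (R : realFieldType) (T : finType) (m : nat)
  (G : {set {set T}}) : R :=
  \sum_(A in G) (('C(m, #|A|))%:R)^-1.

(* U_F(F0) = { G \ F0 : G in F, F0 \subset G }, a family of subsets of
   the (n - |F0|)-element set [n] \ F0. *)
Definition upfam (T : finType) (Fam : {set {set T}}) (F0 : {set T})
  : {set {set T}} :=
  [set G :\: F0 | G in [set G in Fam | F0 \subset G]].

(* Main.v *)
Require Import Defs.
From HB Require Import structures.
From mathcomp Require Import all_boot all_order all_algebra.
From mathcomp Require Import zify ring.
Import Order.TTheory GRing.Theory Num.Theory.
Local Open Scope ring_scope.

Lemma setDD1 (T : finType) (G G0 : {set T}) i :
  i \in G0 -> (G :\ i) :\: (G0 :\ i) = G :\: G0.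
Proof.
move=> iG0; apply/setP=> x; rewrite !inE.
case: (eqVneq x i) => [->|] /=; first by rewrite iG0; case: (i \in G).
by move=> _; case: (x \in G); case: (x \in G0).
Qed.

Lemma subD1 (T : finType) (G G0 : {set T}) i :
  i \in G -> i \in G0 -> (G0 :\ i \subset G :\ i) = (G0 \subset G).
Proof.
move=> iG iG0; apply/idP/idP.
  move/subsetP=> h; apply/subsetP=> x xG0.
  case: (eqVneq x i) => [->//|xi].
  by have := h x; rewrite !inE xi xG0 /= => /(_ isT); case: (x \in G).
by move=> h; apply: setSD.
Qed.

Arguments subD1 {T G G0 i}.
Arguments setDD1 {T G G0 i}.

Lemma weight_id (R : realFieldType) (m k : nat) :
  (0 < k <= m.+1)%N ->
  (('C(m.+1, k))%:R)^-1 = (m.+1%:R)^-1 * (k%:R * (('C(m, k.-1))%:R)^-1) :> R.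
Proof.
case: k => [//|k] /= km.
have h := mul_bin_diag m.+1 k; rewrite /= in h.
have c1 : (0 < 'C(m, k))%N by rewrite bin_gt0.
have c2 : (0 < 'C(m.+1, k.+1))%N by rewrite bin_gt0.
have e : (m.+1%:R * ('C(m, k))%:R = k.+1%:R * ('C(m.+1, k.+1))%:R :> R).
  by rewrite -!natrM h.
have n1 : ('C(m, k))%:R != 0 :> R by rewrite pnatr_eq0 -lt0n.
have n2 : ('C(m.+1, k.+1))%:R != 0 :> R by rewrite pnatr_eq0 -lt0n.
have n3 : (m.+1)%:R != 0 :> R by rewrite pnatr_eq0.
apply: (mulfI n2); rewrite mulfV //.
have -> : ('C(m.+1, k.+1))%:R * ((m.+1%:R)^-1 * (k.+1%:R * (('C(m, k))%:R)^-1)) =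
  (m.+1%:R)^-1 * (k.+1%:R * ('C(m.+1, k.+1))%:R) * (('C(m, k))%:R)^-1 :> R.
  by ring.
by rewrite -e mulrA mulVf // mul1r mulfV.
Qed.

Lemma gen (R : realFieldType) (K : R) (HK : 0 <= K) (T : finType) (m : nat) :
  forall (S : {set T}) (Fam : {set {set T}}), #|S| = m ->
  (forall G, G \in Fam -> G \subset S) ->
  (forall F0, F0 \in Fam -> lubell R (m - #|F0|)%N (upfam Fam F0) <= K) ->
  lubell R m Fam <= K.
Proof.
elim: m => [|m IH] S Fam cS sub hyp.
- case: (boolP (set0 \in Fam)) => [h0|h0].
    have := hyp _ h0; rewrite cards0 subn0.
    suff -> : upfam Fam set0 = Fam by [].
    apply/setP=> X; apply/imsetP/idP => [[G]|XF].
      by rewrite inE => /andP[GF _]; rewrite setD0 => ->.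
    by exists X; rewrite ?inE ?XF ?sub0set ?setD0.
  rewrite /lubell big1 // => G GF.
  have := sub _ GF; move/eqP: cS; rewrite cards_eq0 => /eqP ->.
  by rewrite subset0 => /eqP GE; move: h0; rewrite -GE GF.
- case: (boolP (set0 \in Fam)) => [h0|h0].
    have := hyp _ h0; rewrite cards0 subn0.
    suff -> : upfam Fam set0 = Fam by [].
    apply/setP=> X; apply/imsetP/idP => [[G]|XF].
      by rewrite inE => /andP[GF _]; rewrite setD0 => ->.
    by exists X; rewrite ?inE ?XF ?sub0set ?setD0.
  pose w (k : nat) : R := (('C(m, k))%:R)^-1.
  have step1 : lubell R m.+1 Fam =
     (m.+1%:R)^-1 * \sum_(G in Fam) \sum_(i in S) (if i \in G then w (#|G|.-1) else 0).
    rewrite /lubell mulr_sumr; apply: eq_bigr => G GF.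
    rewrite -big_mkcondr /=.
    have -> : \sum_(i in S | i \in G) w (#|G|.-1) = \sum_(i in G) w (#|G|.-1).
      apply: eq_bigl => i; apply/andP/idP => [[]//|iG]; split=> //.
      exact: (subsetP (sub _ GF)).
    rewrite sumr_const -[w _ *+ _]mulr_natl weight_id //.
    apply/andP; split.
      rewrite card_gt0; apply/negP=> /eqP G0; by move: h0; rewrite -G0 GF.
    by rewrite -cS subset_leq_card // sub.
  rewrite step1 exchange_big /=.
  have step2 : forall i, i \in S ->
      \sum_(G in Fam) (if i \in G then w (#|G|.-1) else 0) =
      lubell R m (upfam Fam [set i]).
    move=> i iS; rewrite -big_mkcondr /lubell /upfam big_imset /=.
      symmetry; apply: eq_big => [G|G]; first by rewrite inE sub1set.
      by rewrite inE sub1set => /andP[_ iG]; rewrite /w (cardsD1 i G) iG.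
    move=> G1 G2; rewrite !inE !sub1set => /andP[_ i1] /andP[_ i2] e.
    by rewrite -(setD1K i1) -(setD1K i2) e.
  rewrite (eq_bigr _ step2).
  have bound : forall i, i \in S -> lubell R m (upfam Fam [set i]) <= K.
    move=> i iS; apply: (IH (S :\ i)).
    + by move: cS; rewrite (cardsD1 i S) iS add1n => -[].
    + move=> H /imsetP[G]; rewrite inE => /andP[GF _] ->.
      by apply: setSD; apply: sub.
    + move=> H /imsetP[G0]; rewrite inE sub1set => /andP[G0F iG0] ->.
      have -> : (m - #|G0 :\ i|)%N = (m.+1 - #|G0|)%N.
        by rewrite (cardsD1 i G0) iG0; lia.
      suff -> : upfam (upfam Fam [set i]) (G0 :\ i) = upfam Fam G0 by apply: hyp.
      apply/setP=> X; apply/imsetP/imsetP.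
      * move=> [G']; rewrite inE => /andP[/imsetP[G GF' ->]].
        move: GF'; rewrite inE sub1set => /andP[GF iG] sG ->.
        exists G; last by rewrite setDD1.
        by rewrite inE GF -(subD1 iG iG0).
      * move=> [G]; rewrite inE => /andP[GF sG] ->.
        have iG : i \in G by apply: (subsetP sG).
        exists (G :\ i); last by rewrite setDD1.
        rewrite inE (subD1 iG iG0) sG andbT.
        by apply/imsetP; exists G; rewrite // inE GF sub1set.
  apply: (@le_trans _ _ ((m.+1%:R)^-1 * \sum_(i in S) K)).
    apply: ler_wpM2l; first by rewrite invr_ge0 ler0n.
    by apply: ler_sum.
  rewrite sumr_const cS -[K *+ _]mulr_natl mulrA mulVf ?mul1r //.
  by rewrite pnatr_eq0.
Qed.

Theorem proposition2p2 (R : realFieldType) (n : nat)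
  (Fam : {set {set 'I_n}}) (K : R) (HK : 0 < K) :
  (forall F0, F0 \in Fam -> lubell R (n - #|F0|)%N (upfam Fam F0) <= K) ->
  lubell R n Fam <= K.
Proof.
move=> h; apply: (@gen R K (ltW HK) _ n [set: 'I_n]) => //.
by rewrite cardsT card_ord.
Qed.
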